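(* Suppose $\xi$ is an $\mathcal{S}$-shrinking point of the map $f$, where $\mathcal{S}=\mathcal{F}[\ell,m,n]$, and let $\{y_i\}$ be the $\mathcal{S}^{\overline0}$-cycle. Then (i) $\{y_i\}$ is both an $\mathcal{S}$-cycle and an $\mathcal{S}^{(-d)}$-cycle; (ii) $I-M_{\mathcal{S}}$ is singular; (iii) $P_{\mathcal{S}^{(i)}}$ is singular for all $i$.
   Context: Fix $N\ge2$. For $\mu\in\mathbb{R}$ and a parameter $\xi$, let $f:\mathbb{R}^N\to\mathbb{R}^N$, $f(x)=A_Lx+B\mu$ if $e_1^{\mathsf T}x\le0$, $f(x)=A_Rx+B\mu$ if $e_1^{\mathsf T}x\ge0$, with $A_L,A_R$ real $N\times N$ matrices, $B\in\mathbb{R}^N$ (depending on $\xi$), and $A_R=A_L+Ce_1^{\mathsf T}$ for some $C\in\mathbb{R}^N$. $f^L(x)=A_Lx+B\mu$, $f^R(x)=A_Rx+B\mu$, $\varrho^{\mathsf T}=e_1^{\mathsf T}\mathrm{adj}(I-A_L)$. A periodic sequence $\mathcal{S}:\mathbb{Z}\to\{L,R\}$ of period $n$ is identified with $\mathcal{S}_0\cdots\mathcal{S}_{n-1}$; indices mod $n$; $\mathcal{S}^{(j)}_i=\mathcal{S}_{i+j}$; $\mathcal{S}^{\overline j}$ differs from $\mathcal{S}$ exactly at indices $\equiv j$. $M_{\mathcal{S}}=A_{\mathcal{S}_{n-1}}\cdots A_{\mathcal{S}_0}$, $P_{\mathcal{S}}=I+A_{\mathcal{S}_{n-1}}+A_{\mathcal{S}_{n-1}}A_{\mathcal{S}_{n-2}}+\cdots+A_{\mathcal{S}_{n-1}}\cdots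 A_{\mathcal{S}_1}$. An $\mathcal{S}$-cycle is $(x_0,\dots,x_{n-1})$ with $x_{(i+1)\bmod n}=f^{\mathcal{S}_i}(x_i)$ for all $i$ (indices of the cycle mod $n$); it is admissible if $e_1^{\mathsf T}x_i\le0$ whenever $\mathcal{S}_i=L$ and $\ge0$ whenever $\mathcal{S}_i=R$. For positive integers $\ell<n$, $m<n$, $\gcd(m,n)=1$: $\mathcal{F}[\ell,m,n]_i=L$ if $im\bmod n<\ell$, $R$ otherwise; $d$ is the inverse of $m$ mod $n$. Definition: with $\mu\ne0$, $\varrho^{\mathsf T}B\ne0$, $\mathcal{S}=\mathcal{F}[\ell,m,n]$, $2\le\ell\le n-2$, $\xi$ is an $\mathcal{S}$-shrinking point if $\det(I-M_{\mathcal{S}^{\overline0}})\ne0$, $\det(I-M_{\mathcal{S}^{\overline{\ell d}}})\ne0$, the (unique) $\mathcal{S}^{\overline0}$-cycle is admissible, and its first coordinates $e_1^{\mathsf T}x_i$ vanish exactly for $i\equiv0$ and $i\equiv\ell d\pmod n$. *)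

(* Defs.v *)
From mathcomp Require Import all_boot all_order all_algebra.
Set Implicit Arguments. Unset Strict Implicit. Unset Printing Implicit Defensive.
Import Order.TTheory GRing.Theory Num.Theory.
Local Open Scope ring_scope.

Inductive LR := Lft | Rgt.

Definition flipLR (s : LR) : LR := match s with Lft => Rgt | Rgt => Lft end.

Definition e1 (R : pzRingType) (N : nat) : 'cV[R]_N :=
  \col_(i < N) (if val i == 0%N then 1 else 0).

Definition fstc (R : pzRingType) (N : nat) (x : 'cV[R]_N) : R :=
  ((e1 R N)^T *m x) ord0 ord0.

Definition Aof (R : pzRingType) (N : nat) (AL AR : 'M[R]_N) (s : LR) : 'M[R]_N :=
  match s with Lft => AL | Rgt => AR end.

(* Periodic sequences S : Z -> {L,R} of period n are represented by functions
   nat -> LR that are read modulo n (only S 0, ..., S (n-1) matter, or they are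
   periodic by construction). *)

Definition seqF (l m n : nat) : nat -> LR :=
  fun i => if ((i * m) %% n < l)%N then Lft else Rgt.

Definition shiftS (S : nat -> LR) (j : nat) : nat -> LR := fun i => S (i + j)%N.

Definition barS (n : nat) (S : nat -> LR) (j : nat) : nat -> LR :=
  fun i => if (i %% n == j %% n)%N then flipLR (S i) else S i.

Fixpoint Mpref (R : pzRingType) (N : nat) (AL AR : 'M[R]_N) (S : nat -> LR) (k : nat)
  : 'M[R]_N :=
  match k with
  | 0 => 1%:M
  | k'.+1 => Aof AL AR (S k') *m Mpref AL AR S k'
  end.

Definition Mseq (R : pzRingType) (N : nat) (AL AR : 'M[R]_N) (n : nat) (S : nat -> LR)
  : 'M[R]_N := Mpref AL AR S n.

Fixpoint Msuf (R : pzRingType) (N : nat) (AL AR : 'M[R]_N) (n : nat) (S : nat -> LR)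
  (k : nat) : 'M[R]_N :=
  match k with
  | 0 => 1%:M
  | k'.+1 => Msuf AL AR n S k' *m Aof AL AR (S (n - k'.+1)%N)
  end.

Definition Pseq (R : pzRingType) (N : nat) (AL AR : 'M[R]_N) (n : nat) (S : nat -> LR)
  : 'M[R]_N := \sum_(k < n) Msuf AL AR n S k.

Definition is_cycle (R : pzRingType) (N : nat) (AL AR : 'M[R]_N) (B : 'cV[R]_N) (mu : R)
  (n : nat) (S : nat -> LR) (x : nat -> 'cV[R]_N) : Prop :=
  forall i, (i < n)%N -> x ((i.+1) %% n)%N = Aof AL AR (S i) *m x i + mu *: B.

Definition admissible (R : realFieldType) (N : nat) (n : nat) (S : nat -> LR)
  (x : nat -> 'cV[R]_N) : Prop :=
  forall i, (i < n)%N ->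
    (S i = Lft -> fstc (x i) <= 0) /\ (S i = Rgt -> 0 <= fstc (x i)).

Definition rhoTB (R : comPzRingType) (N : nat) (AL : 'M[R]_N) (B : 'cV[R]_N) : R :=
  ((e1 R N)^T *m \adj (1%:M - AL) *m B) ord0 ord0.

(* xi is an S-shrinking point, S = F[l,m,n], d the inverse of m mod n *)
Definition shrinking_point (R : realFieldType) (N : nat) (AL AR : 'M[R]_N)
  (B : 'cV[R]_N) (mu : R) (l m n d : nat) : Prop :=
  let S := seqF l m n in
  [/\ mu != 0, rhoTB AL B != 0, (2 <= l <= n - 2)%N,
      \det (1%:M - Mseq AL AR n (barS n S 0)) != 0
        /\ \det (1%:M - Mseq AL AR n (barS n S (l * d)%N)) != 0 &
      forall x, is_cycle AL AR B mu n (barS n S 0) x ->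
        admissible n (barS n S 0) x /\
        (forall i, (i < n)%N ->
           (fstc (x i) = 0 <-> (i %% n = 0 \/ i %% n = (l * d) %% n)%N))].

(* Main.v *)
Require Import Defs.
From mathcomp Require Import all_boot all_order all_algebra.
Set Implicit Arguments. Unset Strict Implicit. Unset Printing Implicit Defensive.
Import Order.TTheory GRing.Theory Num.Theory.
Local Open Scope ring_scope.

Fixpoint Qf (R : realFieldType) N (AL AR : 'M[R]_N) (U : nat -> LR) (k : nat) : 'M[R]_N :=
  match k with
  | 0 => 0
  | k'.+1 => Aof AL AR (U k') *m Qf AL AR U k' + 1%:M
  end.

Lemma Msuf_succ (R : realFieldType) N (AL AR : 'M[R]_N) U k j :
  (j <= k)%N -> Msuf AL AR k.+1 U j.+1 = Aof AL AR (U k) *m Msuf AL AR k U j.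
Proof.
elim: j => [|j IH] hj.
  by rewrite /= mul1mx mulmx1 subSS subn0.
change (Msuf AL AR k.+1 U j.+1 *m Aof AL AR (U (k.+1 - j.+2)%N) = Aof AL AR (U k) *m Msuf AL AR k U j.+1).
by rewrite IH ?(ltnW hj) // -mulmxA subSS.
Qed.

Lemma Qf_Msuf (R : realFieldType) N (AL AR : 'M[R]_N) U k :
  Qf AL AR U k = \sum_(j < k) Msuf AL AR k U j.
Proof.
elim: k => [|k IH]; first by rewrite big_ord0.
rewrite /= big_ord_recl IH mulmx_sumr addrC.
rewrite [Msuf _ _ _ _ ord0]/=.
f_equal.
by apply: eq_bigr => j _; rewrite lift0 Msuf_succ // ltnW.
Qed.

Lemma cycle_affine_k (R : realFieldType) N (AL AR : 'M[R]_N) B mu n U x :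
  is_cycle AL AR B mu n U x ->
  forall k, (k < n)%N -> x k = Mpref AL AR U k *m x 0%N + mu *: (Qf AL AR U k *m B).
Proof.
move=> hx; elim=> [|k IH] hk /=; first by rewrite mul1mx mul0mx scaler0 addr0.
rewrite -(modn_small hk) hx ?(ltnW hk) // IH ?(ltnW hk) //.
rewrite mulmxDr !mulmxA -scalemxAr !mulmxA mulmxDl mul1mx scalerDr addrA.
by [].
Qed.

Lemma cycle_affine (R : realFieldType) N (AL AR : 'M[R]_N) B mu n U x :
  (0 < n)%N -> is_cycle AL AR B mu n U x ->
  (1%:M - Mseq AL AR n U) *m x 0%N = mu *: (Pseq AL AR n U *m B).
Proof.
case: n => [//|n] _ hx.
have e : x 0%N = Mseq AL AR n.+1 U *m x 0%N + mu *: (Pseq AL AR n.+1 U *m B).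
  transitivity (x (n.+1 %% n.+1)%N); first by rewrite modnn.
  rewrite hx // (cycle_affine_k hx) // /Pseq -Qf_Msuf /Mseq /=.
  rewrite mulmxDr !mulmxA -scalemxAr !mulmxA mulmxDl mul1mx scalerDr addrA.
  by [].
by rewrite mulmxBl mul1mx {1}e addrAC subrr add0r.
Qed.

Lemma Msuf_Mpref (R : realFieldType) N (AL AR : 'M[R]_N) n U k :
  (k <= n)%N -> Msuf AL AR n U k *m Mpref AL AR U (n - k) = Mpref AL AR U n.
Proof.
elim: k => [|k IH] hk; first by rewrite subn0 /= mul1mx.
rewrite /= -mulmxA.
have e : (n - k = (n - k.+1).+1)%N by rewrite subnSK.
by rewrite -[X in _ *m X = _]/(Mpref AL AR U (n - k.+1).+1) -e IH // ltnW.
Qed.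

Lemma zmod_aux (V : zmodType) (I M1 MA MC W : V) :
  (I - M1 + W) + (M1 - MA) = I - (MA + MC) + (W + MC).
Proof.
have -> : I - M1 + W + (M1 - MA) = I + W - MA.
  by rewrite (addrAC I (- M1) W) -(addrA (I + W)) addKr.
rewrite opprD (addrC W) !addrA subrK; by rewrite addrAC.
Qed.

Definition Wk (R : realFieldType) N (AL AR : 'M[R]_N) (C : 'cV[R]_N) n U k : 'cV[R]_N :=
  \sum_(j < k) (if U (n - j.+1)%N is Rgt then Msuf AL AR n U j *m C else 0).

Lemma P_id_k (R : realFieldType) N (AL AR : 'M[R]_N) C n U k :
  AR = AL + C *m (e1 R N)^T ->
  \sum_(j < k) Msuf AL AR n U j *m (1%:M - AL) =
  1%:M - Msuf AL AR n U k + Wk AL AR C n U k *m (e1 R N)^T.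
Proof.
move=> hAR; elim: k => [|k IH].
  by rewrite /Wk !big_ord0 /= subrr mul0mx addr0.
rewrite /Wk !big_ord_recr /= -/(Wk AL AR C n U k) IH.
rewrite mulmxBr mulmx1 mulmxDl.
case: (U (n - k.+1)%N) => /=.
  by rewrite mul0mx addr0 (zmod_aux _ _ _ 0) !addr0.
rewrite -/(Aof AL AR Rgt) hAR /= mulmxDr mulmxA.
by rewrite -hAR (zmod_aux _ _ _ (Msuf AL AR n U k *m C *m (e1 R N)^T)).
Qed.

Lemma P_id (R : realFieldType) N (AL AR : 'M[R]_N) C n U :
  AR = AL + C *m (e1 R N)^T ->
  Pseq AL AR n U *m (1%:M - AL) =
  1%:M - Mseq AL AR n U + Wk AL AR C n U n *m (e1 R N)^T.
Proof.
move=> hAR; rewrite /Pseq mulmx_suml (@P_id_k R N AL AR C n U n hAR).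
by rewrite /Mseq -(@Msuf_Mpref R N AL AR n U n) // subnn /= mulmx1.
Qed.
Lemma adjM_gen (R : comPzRingType) n (A B : 'M[R]_n) :
  \det (A *m B) *: (\adj (A *m B) - \adj B *m \adj A) = 0.
Proof.
set D := _ - _.
have DAB : D *m (A *m B) = 0.
  rewrite /D mulmxBl mul_adj_mx -mulmxA (mulmxA (\adj A)) mul_adj_mx.
  rewrite mul_scalar_mx -scalemxAr mul_adj_mx det_mulmx scalar_mxM mul_scalar_mx.
  by rewrite subrr.
by rewrite -mul_mx_scalar -mul_mx_adj mulmxA DAB mul0mx.
Qed.

Lemma adjM (R : idomainType) n (A B : 'M[R]_n) : \adj (A *m B) = \adj B *m \adj A.
Proof.
pose f := horner_eval (0 : R).
pose At := char_poly_mx (- A). pose Bt := char_poly_mx (- B).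
have eX (X : 'M[R]_n) : map_mx f (char_poly_mx (- X)) = X.
  apply/matrixP => i j; rewrite !mxE /f horner_evalE !hornerE /=.
  by rewrite hornerMn hornerX mul0rn sub0r opprK.
have key : \adj (At *m Bt) = \adj Bt *m \adj At.
  have dne : \det (At *m Bt) != 0.
    by rewrite det_mulmx mulf_neq0 // monic_neq0 // char_poly_monic.
  have := adjM_gen At Bt; move/eqP; rewrite scalemx_eq0 (negPf dne) /= subr_eq0.
  by move/eqP.
have := congr1 (map_mx f) key.
by rewrite map_mxM !map_mx_adj map_mxM !eX.
Qed.

Lemma e1adj_col (R : comPzRingType) N (K Y : 'M[R]_N) :
  (forall i j : 'I_N, val j != 0%N -> K i j = Y i j) ->
  (e1 R N)^T *m \adj K = (e1 R N)^T *m \adj Y.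
Proof.
move=> hKY; apply/matrixP => a b; rewrite !mxE; apply: eq_bigr => k _.
rewrite !mxE; case: (eqVneq (val k) 0%N) => hk; last by rewrite !mul0r.
congr (_ * _); rewrite /cofactor; congr (_ * \det _).
apply/matrixP => p q; rewrite !mxE; apply: hKY.
by rewrite /= /bump hk.
Qed.

Lemma detP0 (R : realFieldType) N (AL AR : 'M[R]_N) B C mu n U x :
  AR = AL + C *m (e1 R N)^T -> (0 < n)%N -> mu != 0 -> rhoTB AL B != 0 ->
  \det (1%:M - Mseq AL AR n U) = 0 -> is_cycle AL AR B mu n U x ->
  \det (Pseq AL AR n U) = 0.
Proof.
move=> hAR n0 mu0 rho0 hX hx.
set X := 1%:M - Mseq AL AR n U; set P := Pseq AL AR n U.
have hXY : forall i j : 'I_N, val j != 0%N -> X i j = (P *m (1%:M - AL)) i j.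
  move=> i j hj; rewrite /P (P_id _ _ hAR) [in RHS]mxE -/X.
  rewrite [X in _ + X]mxE big_ord1 !mxE (negPf hj) mulr0 addr0.
  by [].
have r1 := e1adj_col hXY; rewrite adjM in r1.
have hrX : (e1 R N)^T *m \adj X *m X = 0.
  by rewrite -mulmxA mul_adj_mx hX mul_mx_scalar scale0r.
have := congr1 (mulmx^~ (x 0%N)) hrX.
rewrite mul0mx -mulmxA (cycle_affine n0 hx) -/P -scalemxAr r1.
rewrite !mulmxA -(mulmxA _ (\adj P)) mul_adj_mx mul_mx_scalar -scalemxAl.
move=> /matrixP /(_ ord0 ord0); rewrite !mxE => /eqP.
rewrite mulf_eq0 (negPf mu0) /= mulf_eq0 => /orP [/eqP //|h].
by move: rho0; rewrite /rhoTB mxE h.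
Qed.
Lemma e1T_mx0 (R : realFieldType) N (x : 'cV[R]_N) :
  fstc x = 0 -> (e1 R N)^T *m x = 0.
Proof. by move=> hx; apply/matrixP => i j; rewrite (ord1 i) (ord1 j) [RHS]mxE. Qed.

Lemma Aof_fst0 (R : realFieldType) N (AL AR : 'M[R]_N) C (x : 'cV[R]_N) s :
  AR = AL + C *m (e1 R N)^T -> fstc x = 0 -> Aof AL AR s *m x = AL *m x.
Proof.
move=> hAR hx; case: s => //=.
by rewrite hAR mulmxDl -mulmxA e1T_mx0 // mulmx0 addr0.
Qed.

Lemma is_cycle_fst (R : realFieldType) N (AL AR : 'M[R]_N) C B mu n U U' x :
  AR = AL + C *m (e1 R N)^T ->
  (forall i, (i < n)%N -> U i = U' i \/ fstc (x i) = 0) ->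
  is_cycle AL AR B mu n U x -> is_cycle AL AR B mu n U' x.
Proof.
move=> hAR hU hx i hi; rewrite hx //.
have [->|h0] := hU i hi; first by [].
by rewrite !(Aof_fst0 _ hAR h0).
Qed.

Lemma is_cycle_ext (R : realFieldType) N (AL AR : 'M[R]_N) B mu n U U' x :
  (forall i, (i < n)%N -> U i = U' i) ->
  is_cycle AL AR B mu n U x -> is_cycle AL AR B mu n U' x.
Proof. by move=> hU hx i hi; rewrite hx // hU. Qed.

Lemma Mpref_ext (R : realFieldType) N (AL AR : 'M[R]_N) U U' k :
  (forall i, (i < k)%N -> U i = U' i) -> Mpref AL AR U k = Mpref AL AR U' k.
Proof.
elim: k => [|k IH] hU //=.
by rewrite hU // IH // => i hi; apply: hU; apply: ltnW.
Qed.

Lemma hom_prop (R : realFieldType) N (AL AR : 'M[R]_N) n U (u : nat -> 'cV[R]_N) :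
  (forall i, (i < n)%N -> u ((i.+1) %% n)%N = Aof AL AR (U i) *m u i) ->
  forall k, (k < n)%N -> u k = Mpref AL AR U k *m u 0%N.
Proof.
move=> hu; elim=> [|k IH] hk /=; first by rewrite mul1mx.
by rewrite -(modn_small hk) hu ?(ltnW hk) // IH ?(ltnW hk) // mulmxA.
Qed.

Lemma hom_loop (R : realFieldType) N (AL AR : 'M[R]_N) n U (u : nat -> 'cV[R]_N) :
  (0 < n)%N ->
  (forall i, (i < n)%N -> u ((i.+1) %% n)%N = Aof AL AR (U i) *m u i) ->
  u 0%N = Mseq AL AR n U *m u 0%N.
Proof.
case: n => [//|n] _ hu.
transitivity (u (n.+1 %% n.+1)%N); first by rewrite modnn.
by rewrite hu // (hom_prop hu) // /Mseq /= mulmxA.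
Qed.

Lemma cycle_unique (R : realFieldType) N (AL AR : 'M[R]_N) B mu n U x x' :
  (0 < n)%N -> \det (1%:M - Mseq AL AR n U) != 0 ->
  is_cycle AL AR B mu n U x -> is_cycle AL AR B mu n U x' ->
  forall k, (k < n)%N -> x k = x' k.
Proof.
move=> n0 hdet hx hx'.
pose u k := x k - x' k.
have hu : forall i, (i < n)%N -> u ((i.+1) %% n)%N = Aof AL AR (U i) *m u i.
  move=> i hi; rewrite /u hx // hx' // mulmxBr.
  by rewrite opprD addrACA subrr addr0.
have u0 : u 0%N = 0.
  have h1 : (1%:M - Mseq AL AR n U) *m u 0%N = 0.
    by rewrite mulmxBl mul1mx -hom_loop // subrr.
  have hU : (1%:M - Mseq AL AR n U) \in unitmx by rewrite unitmxE unitfE.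
  by rewrite -(mulKmx hU (u 0%N)) h1 mulmx0.
move=> k hk; apply/eqP; rewrite -subr_eq0; apply/eqP.
by rewrite -/(u k) (hom_prop hu hk) u0 mulmx0.
Qed.

From mathcomp Require Import zify.

Lemma seqF_mod l m n a b : (a %% n = b %% n)%N -> seqF l m n a = seqF l m n b.
Proof. by move=> h; rewrite /seqF -modnMml h modnMml. Qed.

Lemma key_cong n m d i : ((m * d) %% n = 1 %% n)%N ->
  (i %% n = (((i * m) %% n) * d) %% n)%N.
Proof. by move=> h; rewrite modnMml -mulnA -modnMmr h modnMmr muln1. Qed.

Lemma shift_sym l m n d i : (2 <= l)%N -> (l <= n - 2)%N -> (d < n)%N ->
  ((m * d) %% n = 1 %% n)%N -> (i < n)%N ->
  barS n (seqF l m n) 0 i = seqF l m n (i + (n - d)) \/ i = ((l * d) %% n)%N.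
Proof.
move=> l2 ln2 hd hmd hi.
have n0 : (0 < n)%N by clear -l2 ln2; lia.
set a := ((i * m) %% n)%N; set b := (((i + (n - d)) * m) %% n)%N.
have hb : (b.+1 %% n = a)%N.
  have e : ((i + (n - d)) * m + m * d = m * n + i * m)%N.
    rewrite mulnDl -addnA [(m * d)%N]mulnC -mulnDl (subnK (ltnW hd)).
    by rewrite addnC mulnC.
  transitivity ((b + m * d) %% n)%N.
    by rewrite -modnDmr hmd modnDmr addn1.
  by rewrite /b modnDml e modnMDl.
have bn : (b < n)%N by apply: ltn_pmod.
have ha : i = ((a * d) %% n)%N by rewrite /a -(key_cong i hmd) modn_small.
rewrite /barS mod0n modn_small //.
have -> : seqF l m n (i + (n - d)) = if (b < l)%N then Lft else Rgt by [].
have -> : seqF l m n i = if (a < l)%N then Lft else Rgt by [].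
have ai : i = 0%N -> a = 0%N by move=> i0; rewrite /a i0 mul0n mod0n.
clearbody a b.
have hbn : (b.+1 < n)%N \/ b.+1 = n by clear -bn; lia.
case: (eqVneq i 0%N) => [i0|i0].
  have a0 : a = 0%N by apply: ai.
  have bn1 : b.+1 = n.
    case: hbn => // hlt; move: hb; rewrite modn_small // a0 //.
  left; rewrite a0 /=.

  have -> : (0 < l)%N by clear -l2; lia.
  have -> : (b < l)%N = false by clear -bn1 ln2; lia.
  by [].
have a0 : a != 0%N by apply/eqP => a0; move: ha; rewrite a0 mul0n mod0n; apply/eqP.
have ab : a = b.+1.
  case: hbn => hlt; first by rewrite -hb modn_small.
  by move: hb; rewrite hlt modnn => h; move: a0; rewrite -h.

case: (ltnP a l) => hal; case: (ltnP b l) => hbl; try by left.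
  clear -ab hal hbl; lia.
right; have al : a = l by clear -ab hal hbl; lia.
by rewrite {1}ha al.
Qed.

Lemma shift_cycle (R : realFieldType) N (AL AR : 'M[R]_N) B mu n U y s :
  (0 < n)%N -> (forall a b, (a %% n = b %% n)%N -> U a = U b) ->
  is_cycle AL AR B mu n U y ->
  is_cycle AL AR B mu n (shiftS U s) (fun k => y ((k + s) %% n)%N).
Proof.
move=> n0 hU hy k hk /=.
rewrite modnDml addSn -(addn1 (k + s)) -modnDml addn1 hy ?ltn_pmod //.
by rewrite (hU _ (k + s)%N) // modn_mod.
Qed.

Theorem proposition5p3 (R : realFieldType) (N : nat) (AL AR : 'M[R]_N)
  (B C : 'cV[R]_N) (mu : R) (l m n d : nat) (y : nat -> 'cV[R]_N) :
  (2 <= N)%N ->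
  AR = AL + C *m (e1 R N)^T ->
  (0 < l < n)%N -> (0 < m < n)%N -> coprime m n ->
  (d < n)%N -> ((m * d) %% n = 1 %% n)%N ->
  shrinking_point AL AR B mu l m n d ->
  is_cycle AL AR B mu n (barS n (seqF l m n) 0) y ->
  [/\ is_cycle AL AR B mu n (seqF l m n) y
        /\ is_cycle AL AR B mu n (shiftS (seqF l m n) (n - d)) y,
      \det (1%:M - Mseq AL AR n (seqF l m n)) = 0 &
      forall i : nat, \det (Pseq AL AR n (shiftS (seqF l m n) i)) = 0].
Proof.
move=> N2 hAR hl hm cop hd hmd hsp hy.
case: hsp => mu0 rho0 /andP[l2 ln2] [dt1 dt2] hcyc.
have [adm zer] := hcyc y hy.
have n0 : (0 < n)%N by clear -l2 ln2; lia.
have n1 : (1 < n)%N by clear -l2 ln2; lia.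
have y0 : fstc (y 0%N) = 0 by apply/(zer 0%N n0); left; rewrite mod0n.
have hyS : is_cycle AL AR B mu n (seqF l m n) y.
  apply: (is_cycle_fst hAR _ hy) => i hi.
  case: (eqVneq i 0%N) => [->|i0]; first by right.
  by left; rewrite /barS mod0n modn_small // (negPf i0).
have hyT : is_cycle AL AR B mu n (shiftS (seqF l m n) (n - d)) y.
  apply: (is_cycle_fst hAR _ hy) => i hi.
  case: (shift_sym l2 ln2 hd hmd hi) => [h|h]; first by left.
  by right; apply/(zer i hi); right; rewrite modn_small.
have perS : forall a b, (a %% n = b %% n)%N -> seqF l m n a = seqF l m n b.
  by move=> a b; apply: seqF_mod.
have perT : forall a b, (a %% n = b %% n)%N ->
    shiftS (seqF l m n) (n - d) a = shiftS (seqF l m n) (n - d) b.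
  by move=> a b h; apply: seqF_mod; rewrite -modnDml h modnDml.
have hdet : forall j0, \det (1%:M - Mseq AL AR n (shiftS (seqF l m n) j0)) = 0.
  move=> j0; case: (eqVneq (\det (1%:M - Mseq AL AR n (shiftS (seqF l m n) j0))) 0)
    => // hne; exfalso.
  have hx := shift_cycle j0 n0 perS hyS.
  have hx'0 := shift_cycle (j0 + d) n0 perT hyT.
  have hx' : is_cycle AL AR B mu n (shiftS (seqF l m n) j0)
      (fun k => y ((k + (j0 + d)) %% n)%N).
    apply: (is_cycle_ext _ hx'0) => i _; apply: seqF_mod.
    have -> : (i + (j0 + d) + (n - d) = (i + j0) + n)%N by clear -hd; lia.
    by rewrite modnDr.
  have hu := cycle_unique n0 hne hx hx'.
  set k0 := ((n - j0 %% n) %% n)%N.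
  have hk0 : (k0 < n)%N by apply: ltn_pmod.
  have e1' : ((k0 + j0) %% n = 0)%N.
    rewrite /k0 modnDml -modnDmr subnK ?modnn //.
    by apply: ltnW; apply: ltn_pmod.
  have e2 : ((k0 + (j0 + d)) %% n = d)%N.
    by rewrite addnA -modnDml e1' add0n modn_small.
  have := hu k0 hk0; rewrite /= e1' e2 => ey.
  have : fstc (y d) = 0 by rewrite -ey.
  move/(zer d hd); rewrite modn_small // => -[d0|hdl].
    by move: hmd; rewrite d0 muln0 mod0n modn_small.
  have : ((m * d) %% n = l)%N.
    by rewrite {1}hdl modnMmr mulnCA -modnMmr hmd modnMmr muln1 modn_small //; clear -ln2 l2; lia.
  rewrite hmd modn_small // => l1; clear -l1 l2; lia.
split.
- by split.
- have -> : Mseq AL AR n (seqF l m n) = Mseq AL AR n (shiftS (seqF l m n) 0).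
    by apply: Mpref_ext => i _; rewrite /shiftS addn0.
  exact: hdet.
- move=> i; exact: (detP0 hAR n0 mu0 rho0 (hdet i) (shift_cycle i n0 perS hyS)).
Qed.
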